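(* Let $\bar d=2^S$ with $S\ge1$, let $\bar\phi\in\mathcal S(\bar d)$, let $T\in\mathbb N_+$ and $\bar p_1,\dots,\bar p_T\in\Delta(\bar d)$. Then for every scale $s\in[1:S]$, $$\sum_{l=1}^{2^{S-s}}\Big(\frac{1}{|I^{(s,l)}|}\sum_{j=1}^{\bar d}\big|\langle\bar\phi,h^{(s,l)}\otimes e^{(j)}\rangle\big|\Big)\sqrt{1+\sum_{t=1}^T\sum_{i\in I^{(s,l)}}\bar p_{t,i}}\ \le\ \sqrt{\sum_{i=1}^{\bar d-1}\mathbf 1[\bar\phi_i\neq\bar\phi_{i+1}]}\cdot\sqrt{\bar d+T}.$$
   Context: $\Delta(n)=\{p\ge0,\|p\|_1=1\}$; $\mathcal S(n)$ is the set of $n\times n$ right stochastic matrices; $\bar\phi_i$ is the $i$-th row; $\langle x,y\rangle=\sum_{i,j}x_{i,j}y_{i,j}$; $(u\otimes v)_{i,j}=u_iv_j$; $e^{(j)}$ is the $j$-th standard basis vector; $[a:b]=\{a,\dots,b\}$. For $s\in[1:S]$, $l\in[1:2^{S-s}]$, the Haar vector $h^{(s,l)}\in\mathbb R^{\bar d}$ has entries $1$ on $[2^s(l-1)+1:2^s(l-1)+2^{s-1}]$, $-1$ on $[2^s(l-1)+2^{s-1}+1:2^sl]$, and $0$ elsewhere; its support is $I^{(s,l)}=[2^s(l-1)+1:2^sl]$. *)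

(* Defs.v *)
From mathcomp Require Import all_boot all_order all_algebra.
From mathcomp Require Import reals.
Set Implicit Arguments. Unset Strict Implicit. Unset Printing Implicit Defensive.
Import Order.TTheory GRing.Theory Num.Theory.
Local Open Scope ring_scope.

(* Indices are 0-based: paper index i in [1:n] corresponds to ordinal i-1. *)

Definition right_stochastic (R : realType) (n : nat) (phi : 'M[R]_n) : Prop :=
  (forall i j, 0 <= phi i j) /\ (forall i, \sum_(j < n) phi i j = 1).

Definition in_simplex (R : realType) (n : nat) (p : 'I_n -> R) : Prop :=
  (forall i, 0 <= p i) /\ \sum_(i < n) p i = 1.

Definition haar (R : realType) (S s l : nat) (i : 'I_(2 ^ S)) : R :=
  let a := (2 ^ s * (l - 1))%N in
  let i1 := (i : nat).+1 in
  if (a < i1 <= a + 2 ^ (s - 1))%N then 1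
  else if (a + 2 ^ (s - 1) < i1 <= 2 ^ s * l)%N then -1
  else 0.

Definition haar_supp (S s l : nat) : {set 'I_(2 ^ S)} :=
  [set i : 'I_(2 ^ S) | (2 ^ s * (l - 1) < (i : nat).+1 <= 2 ^ s * l)%N].

Definition haar_coef (R : realType) (S s l : nat) (phi : 'M[R]_(2 ^ S))
    (j : 'I_(2 ^ S)) : R :=
  \sum_(i < 2 ^ S) \sum_(k < 2 ^ S)
     phi i k * (@haar R S s l i * (if k == j then 1 else 0)).

Definition num_switches (R : realType) (n : nat) (phi : 'M[R]_n) : nat :=
  #|[set ik : 'I_n * 'I_n |
      ((ik.2 : nat) == (ik.1 : nat).+1) && (row ik.1 phi != row ik.2 phi)]|.

(* Main.v *)
Require Import Defs.
From mathcomp Require Import all_boot all_order all_algebra.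
From mathcomp Require Import reals.
From mathcomp Require Import zify ring lra.
Import Order.TTheory GRing.Theory Num.Theory.
Local Open Scope ring_scope.

Lemma CS_sqrt (R : rcfType) (r : seq nat) (x y : nat -> R) :
  \sum_(l <- r) x l * y l <=
  Num.sqrt (\sum_(l <- r) x l ^+ 2) * Num.sqrt (\sum_(l <- r) y l ^+ 2).
Proof.
set X := \sum_(l <- r) x l * y l.
set A := \sum_(l <- r) x l ^+ 2.
set B := \sum_(l <- r) y l ^+ 2.
have A0 : 0 <= A by apply: sumr_ge0 => l _; exact: sqr_ge0.
have B0 : 0 <= B by apply: sumr_ge0 => l _; exact: sqr_ge0.
have [Az|Anz] := eqVneq A 0.
  have -> : X = 0.
    rewrite /X; move: Az; rewrite /A; clear X A B A0 B0.
    elim: r => [|a r IH]; first by rewrite !big_nil.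
    rewrite !big_cons => /eqP; rewrite paddr_eq0 ?sqr_ge0 //; last first.
      by apply: sumr_ge0 => l _; exact: sqr_ge0.
    case/andP => /eqP /eqP; rewrite sqrf_eq0 => /eqP -> /eqP /IH ->.
    by rewrite mul0r addr0.
  by rewrite mulr_ge0 ?sqrtr_ge0.
have Apos : 0 < A by rewrite lt_def Anz A0.
have E : \sum_(l <- r) (X * x l - A * y l) ^+ 2 = A * (A * B - X ^+ 2).
  rewrite (eq_bigr (fun l => X ^+ 2 * x l ^+ 2 - (2 * X * A) * (x l * y l)
     + A ^+ 2 * y l ^+ 2)); last by move=> l _; ring.
  rewrite big_split /= big_split /= sumrN -!mulr_sumr -/X -/A -/B; ring.
have : 0 <= A * (A * B - X ^+ 2).
  by rewrite -E; apply: sumr_ge0 => l _; exact: sqr_ge0.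
rewrite pmulr_rge0 // subr_ge0 => H.
rewrite -sqrtrM //; apply: (le_trans (ler_norm X)).
by rewrite -sqrtr_sqr ler_sqrt // mulr_ge0.
Qed.

Lemma supp_div S s l (i : 'I_(2^S)) : (1 <= l)%N ->
  (i \in haar_supp S s l) = (i %/ 2^s == l - 1)%N.
Proof.
move=> l1; have m0 : (0 < 2 ^ s)%N by rewrite expn_gt0.
rewrite inE eqn_leq.
have -> : (i %/ 2 ^ s <= l - 1)%N = (i %/ 2 ^ s < l)%N.
  by rewrite subn1 -ltnS prednK.
rewrite leq_divRL // ltn_divLR // ltnS andbC.
by rewrite [((l - 1) * _)%N]mulnC [(l * _)%N]mulnC.
Qed.

Lemma sum_ind (R : realType) (N q : nat) :
  \sum_(1 <= l < N.+1) ((q == l - 1)%N%:R : R) = (q < N)%N%:R.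
Proof.
elim: N => [|N IH]; first by rewrite big_geq.
rewrite big_nat_recr //= IH subn1 /= ltnS [(q <= N)%N]leq_eqVlt.
case: (q =P N) => [->|_] /=; first by rewrite ltnn add0r.
by rewrite addr0.
Qed.

Lemma pow_half s : (1 <= s)%N -> (2 ^ s = 2 ^ (s - 1) + 2 ^ (s - 1))%N.
Proof. by case: s => // s _; rewrite subn1 /= expnS mul2n addnn. Qed.

Lemma mul_l (m l : nat) : (1 <= l)%N -> (m * l = m * (l - 1) + m)%N.
Proof. by move=> l1; rewrite -mulnSr subn1 prednK. Qed.

Lemma haar_bound (R : realType) S s l (i : 'I_(2^S)) : (1 <= s)%N -> (1 <= l)%N ->
  `|@haar R S s l i| <= (i \in haar_supp S s l)%:R.
Proof.
move=> s1 l1; rewrite /haar inE /= (mul_l (2 ^ s) l l1).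
have hm := pow_half s s1.
move: hm; set a := (2 ^ s * (l - 1))%N; set m := (2 ^ s)%N; set h := (2 ^ (s - 1))%N => hm.
case: ifP => [/andP[H1 H2]|_].
  rewrite normr1; have -> : (a < i.+1 <= a + m)%N by apply/andP; split; lia.
  by [].
case: ifP => [/andP[H1 H2]|_].
  rewrite normrN1; have -> : (a < i.+1 <= a + m)%N by apply/andP; split; lia.
  by [].
by rewrite normr0 ler0n.
Qed.

Lemma haar_out (R : realType) S s l (i : 'I_(2^S)) : (1 <= s)%N -> (1 <= l)%N ->
  i \notin haar_supp S s l -> @haar R S s l i = 0.
Proof.
move=> s1 l1 /negbTE Hi; apply/normr0_eq0/eqP; rewrite eq_le normr_ge0 andbT.
by have := @haar_bound R S s l i s1 l1; rewrite Hi.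
Qed.

Lemma haar_sum (R : realType) S s l : (1 <= s <= S)%N -> (1 <= l <= 2 ^ (S - s))%N ->
  \sum_(i < 2 ^ S) @haar R S s l i = 0.
Proof.
move=> /andP[s1 sS] /andP[l1 lN].
pose hn (n : nat) : R := let a := (2 ^ s * (l - 1))%N in
  let i1 := n.+1 in
  if (a < i1 <= a + 2 ^ (s - 1))%N then 1
  else if (a + 2 ^ (s - 1) < i1 <= 2 ^ s * l)%N then -1
  else 0.
rewrite (_ : \sum_(i < 2^S) _ = \sum_(0 <= n < 2^S) hn n); last by rewrite big_mkord.
have hm := pow_half s s1.
have mlS : (2 ^ s * l <= 2 ^ S)%N.
  have -> : (2 ^ S = 2 ^ s * 2 ^ (S - s))%N by rewrite -expnD subnKC.
  by rewrite leq_mul2l lN orbT.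
rewrite /hn (mul_l (2 ^ s) l l1) in mlS *.
move: hm mlS; set a := (2 ^ s * (l - 1))%N; set m := (2 ^ s)%N; set h := (2 ^ (s - 1))%N.
move=> hm mlS.
rewrite (@big_cat_nat _ _ _ a 0 (2 ^ S)) /=; try lia.
rewrite [X in _ + X](@big_cat_nat _ _ _ (a + h) a (2 ^ S)) /=; try lia.
rewrite [X in _ + (_ + X)](@big_cat_nat _ _ _ (a + m) (a + h) (2 ^ S)) /=; try lia.
rewrite (@eq_big_nat _ _ _ 0 a _ (fun=> 0)); last first.
  move=> n /andP[_ Hn]; rewrite ifF; last by apply/negbTE; lia.
  by rewrite ifF //; apply/negbTE; lia.
rewrite (@eq_big_nat _ _ _ a (a + h) _ (fun=> 1)); last first.
  by move=> n Hn; rewrite ifT //; lia.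
rewrite (@eq_big_nat _ _ _ (a + h) (a + m) _ (fun=> -1)); last first.
  move=> n Hn; rewrite ifF; last by apply/negbTE; lia.
  by rewrite ifT //; lia.
rewrite (@eq_big_nat _ _ _ (a + m) (2 ^ S) _ (fun=> 0)); last first.
  move=> n /andP[Hn _]; rewrite ifF; last by apply/negbTE; lia.
  by rewrite ifF //; apply/negbTE; lia.
rewrite !sumr_const_nat !mul0rn add0r addr0.
have -> : (a + m - (a + h) = h)%N by lia.
have -> : (a + h - a = h)%N by lia.
by rewrite mulNrn subrr.
Qed.

Lemma coefE (R : realType) S s l (phi : 'M[R]_(2 ^ S)) j :
  @haar_coef R S s l phi j = \sum_i phi i j * @haar R S s l i.
Proof.
apply: eq_bigr => i _; rewrite (bigD1 j) //= eqxx mulr1 big1 ?addr0 //.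
by move=> k /negbTE ->; rewrite !mulr0.
Qed.

Lemma coef_zero (R : realType) S s l (phi : 'M[R]_(2 ^ S)) j :
  (1 <= s <= S)%N -> (1 <= l <= 2 ^ (S - s))%N ->
  (forall i k : 'I_(2 ^ S), (k : nat) = (i : nat).+1 -> i \in haar_supp S s l ->
     row i phi = row k phi) ->
  @haar_coef R S s l phi j = 0.
Proof.
move=> sr lr Hyp; have /andP[s1 sS] := sr; have /andP[l1 lN] := lr.
have mlS : (2 ^ s * l <= 2 ^ S)%N.
  have -> : (2 ^ S = 2 ^ s * 2 ^ (S - s))%N by rewrite -expnD subnKC.
  by rewrite leq_mul2l lN orbT.
have m0 : (0 < 2 ^ s)%N by rewrite expn_gt0.
have insupp : forall i : 'I_(2 ^ S), (i \in haar_supp S s l) =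
    (2 ^ s * (l - 1) <= i < 2 ^ s * (l - 1) + 2 ^ s)%N.
  by move=> i; rewrite inE (mul_l (2 ^ s) l l1).
rewrite (mul_l (2 ^ s) l l1) in mlS.
move: insupp mlS; set a := (2 ^ s * (l - 1))%N; set m := (2 ^ s)%N => insupp mlS.
have Ha : (a < 2 ^ S)%N by lia.
pose a0 : 'I_(2 ^ S) := Ordinal Ha.
have Hk : forall k, (k < m)%N -> forall i : 'I_(2 ^ S), (i : nat) = (a + k)%N ->
    row i phi = row a0 phi.
  elim=> [|k IH] km i Hi.
    by congr row; apply: val_inj; rewrite /= Hi addn0.
  have Hk' : (a + k < 2 ^ S)%N by have := ltn_ord i; lia.
  pose i' : 'I_(2 ^ S) := Ordinal Hk'.
  rewrite -(IH _ i') //; last by lia.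
  symmetry; apply: Hyp; first by rewrite Hi /= addnS.
  by rewrite insupp /=; lia.
rewrite coefE (eq_bigr (fun i => phi a0 j * @haar R S s l i)).
  by rewrite -mulr_sumr haar_sum // mulr0.
move=> i _; case Hi: (i \in haar_supp S s l).
  have Hr : row i phi = row a0 phi.
    apply: (Hk (i - a)%N); move: Hi; rewrite insupp; lia.
  by have := congr1 (fun r : 'rV[R]_(2 ^ S) => r 0 j) Hr; rewrite !mxE => ->.
by rewrite haar_out ?Hi // !mulr0.
Qed.

Lemma inner_le1 (R : realType) S s N (i : 'I_(2 ^ S)) :
  \sum_(1 <= l < N.+1) ((i \in haar_supp S s l)%:R : R) <= 1.
Proof.
rewrite (@eq_big_nat _ _ _ 1 N.+1 _ (fun l => ((i %/ 2 ^ s == l - 1)%N%:R : R))).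
  by rewrite sum_ind lern1 leq_b1.
by move=> l /andP[l1 _]; rewrite supp_div.
Qed.

Lemma card_sum (T : finType) (R : realType) (A : {set T}) (Q : pred T) :
  (#|[set x in A | Q x]|%:R : R) = \sum_(x in A) (Q x)%:R.
Proof.
rewrite -sum1_card natr_sum big_mkcond [RHS]big_mkcond; apply: eq_bigr => x _.
by rewrite inE; case: (x \in A); case: (Q x).
Qed.

Theorem mainTheorem6 (R : realType) (S : nat) (phi : 'M[R]_(2 ^ S))
    (T : nat) (p : 'I_T -> 'I_(2 ^ S) -> R) (s : nat) :
  (1 <= S)%N ->
  right_stochastic phi ->
  (0 < T)%N ->
  (forall t, in_simplex (p t)) ->
  (1 <= s <= S)%N ->
  \sum_(1 <= l < (2 ^ (S - s)).+1)
     ((#|haar_supp S s l|%:R)^-1 *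
        \sum_(j < 2 ^ S) `|@haar_coef R S s l phi j|) *
     Num.sqrt (1 + \sum_(t < T) \sum_(i in haar_supp S s l) p t i)
  <= Num.sqrt ((num_switches phi)%:R) * Num.sqrt ((2 ^ S)%:R + T%:R).
Proof.
move=> S1 [phi0 phisum] T0 Hp sr; have /andP[s1 sS] := sr.
set N := (2 ^ (S - s))%N.
pose c l := ((#|haar_supp S s l|%:R)^-1 *
        \sum_(j < 2 ^ S) `|@haar_coef R S s l phi j|).
pose P l := \sum_(t < T) \sum_(i in haar_supp S s l) p t i.
apply: le_trans (CS_sqrt _ (index_iota 1 N.+1) c (fun l => Num.sqrt (1 + P l))) _.
have P0 : forall l, 0 <= P l.
  move=> l; apply: sumr_ge0 => t _; apply: sumr_ge0 => i _; exact: (Hp t).1.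
apply: ler_pM; rewrite ?sqrtr_ge0 // ler_sqrt ?addr_ge0 ?ler0n //.
-
  set Sw := [set ik : 'I_(2 ^ S) * 'I_(2 ^ S) |
      ((ik.2 : nat) == (ik.1 : nat).+1) && (row ik.1 phi != row ik.2 phi)].
  have -> : num_switches phi = #|Sw| by [].
  apply: (@le_trans _ _ (\sum_(1 <= l < N.+1)
            (#|[set ik in Sw | ik.1 \in haar_supp S s l]|%:R : R))).
    rewrite big_seq_cond [X in _ <= X]big_seq_cond; apply: ler_sum => l.
    rewrite andbT mem_index_iota => /andP[l1 lN].
    have lr : (1 <= l <= N)%N by rewrite l1 -ltnS.
    have bnd : \sum_(j < 2 ^ S) `|@haar_coef R S s l phi j| <=
               #|haar_supp S s l|%:R.
      apply: (@le_trans _ _ (\sum_(j < 2 ^ S) \sum_(i < 2 ^ S)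
                phi i j * (i \in haar_supp S s l)%:R)).
        apply: ler_sum => j _; rewrite coefE.
        apply: le_trans (ler_norm_sum _ _ _) _; apply: ler_sum => i _.
        by rewrite normrM ger0_norm // ler_wpM2l // haar_bound.
      rewrite exchange_big /=.
      rewrite (eq_bigr (fun i => (i \in haar_supp S s l)%:R)); last first.
        by move=> i _; rewrite -mulr_suml phisum mul1r.
      rewrite -sum1_card natr_sum [X in _ <= X]big_mkcond /=.
      by apply: ler_sum => i _; case: (i \in _).
    have c0 : 0 <= c l.
      by rewrite mulr_ge0 ?invr_ge0 ?ler0n // sumr_ge0 // => j _; exact: normr_ge0.
    have c1 : c l <= 1.
      rewrite /c; have [k0|kpos] := eqVneq (#|haar_supp S s l|) 0%N.
        by rewrite k0 invr0 mul0r ler01.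
      by rewrite mulrC ler_pdivrMr ?mul1r // ltr0n lt0n.
    have [A0|An0] := eqVneq (#|[set ik in Sw | ik.1 \in haar_supp S s l]|) 0%N.
      have -> : c l = 0.
        rewrite /c big1 ?mulr0 // => j _; rewrite (@coef_zero R S s l phi j sr lr) ?normr0 //.
        move=> i k Hk Hi; apply/eqP/negPn/negP => Hne.
        move: A0 => /eqP; rewrite cards_eq0 => /eqP/setP/(_ (i, k)).
        have HSw : (i, k) \in Sw by rewrite inE /= Hk eqxx Hne.
        by rewrite in_set HSw /= Hi in_set0.
      by rewrite A0 expr0n.
    apply: (@le_trans _ _ 1); last by rewrite ler1n lt0n.
    by rewrite expr2 mulr_ile1.
  under eq_bigr do rewrite card_sum.
  rewrite exchange_big /= -sum1_card natr_sum; apply: ler_sum => ik _.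
  exact: inner_le1.
-
  rewrite (eq_bigr (fun l => 1 + P l)); last first.
    by move=> l _; rewrite sqr_sqrtr // addr_ge0.
  rewrite big_split /= sumr_const_nat subn1 /=.
  apply: lerD; first by rewrite ler_nat /N leq_pexp2l // leq_subr.
  rewrite /P exchange_big /=.
  apply: (@le_trans _ _ (\sum_(t < T) 1)); last by rewrite sumr_const card_ord.
  apply: ler_sum => t _.
  rewrite (eq_bigr (fun l => \sum_i (i \in haar_supp S s l)%:R * p t i)); last first.
    move=> l _; rewrite big_mkcond; apply: eq_bigr => i _.
    by case: (i \in _); rewrite ?mul1r ?mul0r.
  rewrite exchange_big /=.
  apply: (@le_trans _ _ (\sum_i p t i)); last by rewrite (Hp t).2.
  apply: ler_sum => i _.
  rewrite -mulr_suml; apply: ler_piMl; first exact: (Hp t).1.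
  exact: inner_le1.
Qed.
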